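(* For every semistandard hook-valued tableau $T$ of shape $\lambda$, the recording tableau $Q(T)$ of the uncrowding map $\mathcal U(T)=(P(T),Q(T))$ is a column-flagged increasing tableau.
   Context: French notation: row $1$ is the bottom row, rows numbered upward, columns left to right; cell $(r,c)$ is in row $r$, column $c$. A semistandard tableau of hook shape consists of a hook entry $x$, a leg $\ell_1<\dots<\ell_p$ above $x$ with $x<\ell_1$, and an arm $a_1\le\dots\le a_q$ to the right of $x$ with $x\le a_1$ ($p,q\ge0$, positive integers). A (semistandard) hook-valued tableau (HVT) of partition shape $\lambda$ is a filling of the cells of $\lambda$ by such hook tableaux with $\max(A)\le\min(B)$ whenever the cell of $A$ is left of that of $B$ in the same row, and $\max(A)<\min(C)$ whenever the cell of $A$ is below that of $C$ in the same column. Arm excess = total number of arm entries. A column-flagged increasing tableau of shape $\mu/\lambda$ (where $\lambda\subseteq\mu$ are partitions whose first columns have equal length) is a filling of the cells of $\mu/\lambda$ by positive integers, strictly increasing along rows and along columns, such that every entry in column $j$ is at most $j-1$ (i.e. its transpose is a flagged increasing tableau). Uncrowding bumping $\mathcal V_b$: if arm excess of $T$ is $0$, $\mathcal V_b(T)=T$. Otherwise let $c$ be the largest index of a column containing a cell with nonempty arm; among such cells in column $c$ let $(r,c)$ be the one whose arm contains the largest value. Let $a$ be the largest arm entry of $(r,c)$, $\ell$ its largest leg entry, and $(a,\ell]\cap\mathsf L_T(r,c)$ the set of leg entries $x$ of $(r,c)$ with $a<x\le\ell$. In column $c+1$ find the smallest entry $\ge a$. If none exists, attach a new empty cell on top of column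 $c+1$, with row $\tilde r$, and let $k$ be empty; otherwise let $k$ be this entry and $(\tilde r,c+1)$ its cell. (a) If $\tilde r\ne r$: remove $a$ from the arm of $(r,c)$, put $a$ in the position of $k$ in $(\tilde r,c+1)$ (as hook entry if the cell is new), append $k$ (if nonempty) to the arm of $(\tilde r,c+1)$. (b) If $\tilde r=r$: move $(a,\ell]\cap\mathsf L_T(r,c)$ from the leg of $(r,c)$ into the leg of $(r,c+1)$, remove $a$ from the arm of $(r,c)$, replace the hook entry of $(r,c+1)$ by $a$, append $k$ (if nonempty) to the arm of $(r,c+1)$. Uncrowding insertion: $\mathcal V(T)=\mathcal V_b^d(T)$ where $d\ge1$ is minimal such that $\mathsf{shape}(\mathcal V_b^d(T))\neq\mathsf{shape}(\mathcal V_b^{d-1}(T))$ or $\mathcal V_b^d(T)=\mathcal V_b^{d-1}(T)$. Uncrowding map: for $T\in\mathsf{HVT}(\lambda)$ with arm excess $\alpha$, set $P_0=T$ and $Q_0$ the empty tableau of shape $\lambda/\lambda$; for $1\le i\le\alpha$ let $P_i=\mathcal V(P_{i-1})$, let $c$ be the index of the rightmost column of $P_{i-1}$ containing a cell with nonzero arm excess and $\tilde c$ the column of the cell $\mathsf{shape}(P_i)/\mathsf{shape}(P_{i-1})$; $Q_i$ is $Q_{i-1}$ with this cell added and filled with $\tilde c-c$. Then $\mathcal U(T)=(P(T),Q(T)):=(P_\alpha,Q_\alpha)$. *)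

(* Defs.v *)
From mathcomp Require Import all_boot.
Set Implicit Arguments. Unset Strict Implicit. Unset Printing Implicit Defensive.

(* Conventions:
   - a tableau is a seq of columns (left to right); a column is a seq of
     cells from bottom (row 1) to top.  Column index j and row index i are
     0-based in the seqs: list position (i, j) is cell (row i+1, column j+1).
   - a hook tableau (cell content) is (hook entry, leg, arm). *)

Definition hcell := (nat * seq nat * seq nat)%type.
Definition hk (x : hcell) : nat := x.1.1.
Definition leg (x : hcell) : seq nat := x.1.2.
Definition arm (x : hcell) : seq nat := x.2.
Definition dcell : hcell := (0, [::], [::]).

Definition tab := seq (seq hcell).
Definition cell (T : tab) (i j : nat) : hcell := nth dcell (nth [::] T j) i.

(* shape as the list of column lengths (the conjugate partition) *)
Definition tab_shape (T : tab) : seq nat := map size T.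

Definition young (s : seq nat) : bool :=
  all (fun n => 0 < n) s && sorted geq s.

Definition valid_hook (x : hcell) : bool :=
  [&& 0 < hk x, sorted ltn (hk x :: leg x) & sorted leq (hk x :: arm x)].

Definition entries (x : hcell) : seq nat := hk x :: leg x ++ arm x.
Definition maxe (x : hcell) : nat := foldr maxn 0 (entries x).
Definition mine (x : hcell) : nat := foldr minn (hk x) (leg x ++ arm x).

Definition is_HVT (T : tab) : Prop :=
  [/\ young (tab_shape T),
      (forall j i, i < size (nth [::] T j) -> valid_hook (cell T i j)),
      (forall i j j', j < j' -> i < size (nth [::] T j') ->
         maxe (cell T i j) <= mine (cell T i j')) &
      (forall i i' j, i < i' -> i' < size (nth [::] T j) ->
         maxe (cell T i j) < mine (cell T i' j))].

Definition arm_excess (T : tab) : nat :=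
  sumn [seq sumn [seq size (arm x) | x <- col] | col <- T].

Definition arm_col (T : tab) : nat :=
  last 0 [seq j <- iota 0 (size T) |
          has (fun x => arm x != [::]) (nth [::] T j)].

Definition maxs (s : seq nat) : nat := foldr maxn 0 s.

Fixpoint repl1 (k a : nat) (s : seq nat) : seq nat :=
  match s with
  | [::] => [::]
  | y :: s' => if y == k then a :: s' else y :: repl1 k a s'
  end.

Definition Vb (T : tab) : tab :=
  if arm_excess T == 0 then T else
  let c := arm_col T in
  let col := nth [::] T c in
  let mx := maxs [seq maxs (arm x) | x <- col] in
  let r := find (fun x => (arm x != [::]) && (maxs (arm x) == mx)) col in
  let x := nth dcell col r in
  let a := maxs (arm x) in
  let l := maxs (leg x) in
  let inS := fun y => (a < y) && (y <= l) in
  let S := [seq y <- leg x | inS y] in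
  let col' := nth [::] T c.+1 in
  let ents := [seq v <- flatten [seq entries y | y <- col'] | a <= v] in
  let ok : option nat :=
      if ents is e :: _ then Some (foldr minn e ents) else None in
  let rt := if ok is Some k then find (fun y => k \in entries y) col'
            else size col' in
  let y := nth dcell col' rt in
  let addarm s := if ok is Some k then sort leq (rcons s k) else s in
  let x1 : hcell :=
      if rt != r then (hk x, leg x, rem a (arm x))
      else (hk x, [seq z <- leg x | ~~ inS z], rem a (arm x)) in
  let y1 : hcell :=
      if rt != r then
        match ok with
        | None => (a, [::], [::])
        | Some k =>
            if hk y == k then (a, leg y, addarm (arm y))
            else if k \in leg y then (hk y, sort leq (repl1 k a (leg y)), addarm (arm y))
            else (hk y, leg y, addarm (sort leq (repl1 k a (arm y))))
        end
      else (a, sort leq (S ++ leg y), addarm (arm y)) in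
  let T1 := set_nth [::] T c (set_nth dcell col r x1) in
  set_nth [::] T1 c.+1 (set_nth dcell col' rt y1).

(* The fuel (size T + 1, allowing size T + 2 steps) is
   sufficient: each non-final step moves the rightmost nonempty arm one
   column to the right. *)
Fixpoint Viter (n : nat) (T : tab) : tab :=
  let T' := Vb T in
  if (tab_shape T' != tab_shape T) || (T' == T) then T'
  else if n is n'.+1 then Viter n' T' else T'.

Definition V (T : tab) : tab := Viter (size T).+1 T.

(* the (0-based) cell (row, column) of shape s' / s, assuming it is one cell *)
Definition new_cell (s s' : seq nat) : nat * nat :=
  let j := find id [seq nth 0 s i != nth 0 s' i | i <- iota 0 (size s').+1] in
  ((nth 0 s' j).-1, j).

Definition filling := nat -> nat -> nat.

Fixpoint uncrowd_aux (n : nat) (P : tab) (Q : filling) : tab * filling :=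
  if n is n'.+1 then
    let P' := V P in
    let c := arm_col P in
    let rc := new_cell (tab_shape P) (tab_shape P') in
    let Q' := fun i j => if (i, j) == rc then rc.2 - c else Q i j in
    uncrowd_aux n' P' Q'
  else (P, Q).

Definition uncrowd (T : tab) : tab * filling :=
  uncrowd_aux (arm_excess T) T (fun _ _ => 0).
Definition uncrowdP (T : tab) : tab := (uncrowd T).1.
Definition uncrowdQ (T : tab) : filling := (uncrowd T).2.

(* column-flagged increasing tableau of shape mu / lambda, shapes given
   by column lengths, cells 0-based; the flag "entry in column j is at most
   j - 1" (1-based j) reads  Q i j <= j  for 0-based j. *)
Definition in_skew (lam mu : seq nat) (i j : nat) : bool :=
  (nth 0 lam j <= i) && (i < nth 0 mu j).

Definition col_flagged_increasing (lam mu : seq nat) (Q : filling) : Prop :=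
  [/\ young lam, young mu,
      (size lam <= size mu) /\ (forall j, nth 0 lam j <= nth 0 mu j),
      nth 0 lam 0 = nth 0 mu 0 &
      [/\ (forall i j, in_skew lam mu i j -> 0 < Q i j /\ Q i j <= j),
          (forall i j j', j < j' -> in_skew lam mu i j -> in_skew lam mu i j' ->
             Q i j < Q i j') &
          (forall i i' j, i < i' -> in_skew lam mu i j -> in_skew lam mu i' j ->
             Q i j < Q i' j)]].

(* Main.v *)
Require Import Defs.
From mathcomp Require Import all_boot zify.
Set Implicit Arguments. Unset Strict Implicit. Unset Printing Implicit Defensive.

Local Notation col T j := (nth [::] T j).

Lemma maxs_ge (s : seq nat) v : v \in s -> v <= foldr maxn 0 s.
Proof. elim: s => //= y s IH; rewrite inE => /orP[/eqP->|/IH]; lia. Qed.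

Lemma maxn_eq (a b : nat) : maxn a b = a \/ maxn a b = b.
Proof. rewrite /maxn; case: ltnP; auto. Qed.
Lemma minn_eq (a b : nat) : minn a b = a \/ minn a b = b.
Proof. rewrite /minn; case: ltnP; auto. Qed.

Lemma maxs_mem (s : seq nat) : s != [::] -> foldr maxn 0 s \in s.
Proof.
elim: s => // y s IH _; rewrite [foldr _ _ _]/= inE.
case: s IH => [|z s] IH; first by rewrite /= maxn0 eqxx.
case: (maxn_eq y (foldr maxn 0 (z :: s))) => ->; first by rewrite eqxx.
by rewrite IH // orbT.
Qed.

Lemma mins_le (h : nat) s v : v \in h :: s -> foldr minn h s <= v.
Proof.
elim: s v => /= [|y s IH] v; first by rewrite inE => /eqP->.
rewrite !inE => /orP[/eqP->|/orP[/eqP->|H]].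
- have := IH h; rewrite inE eqxx => /(_ isT); lia.
- lia.
- have := IH v; rewrite inE H orbT => /(_ isT); lia.
Qed.

Lemma mins_mem (h : nat) s : foldr minn h s \in h :: s.
Proof.
elim: s => [|y s IH]; first by rewrite /= inE.
rewrite [foldr _ _ _]/=; case: (minn_eq y (foldr minn h s)) => ->.
  by rewrite !inE eqxx orbT.
by move: IH; rewrite !inE => /orP[->|->]; rewrite ?orbT.
Qed.

Lemma maxe_ge x v : v \in entries x -> v <= maxe x.
Proof. exact: maxs_ge. Qed.
Lemma maxe_mem x : maxe x \in entries x.
Proof. exact: maxs_mem. Qed.
Lemma mine_le x v : v \in entries x -> mine x <= v.
Proof. exact: mins_le. Qed.
Lemma mine_mem x : mine x \in entries x.
Proof. exact: mins_mem. Qed.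

Lemma hk_entries x : hk x \in entries x.
Proof. by rewrite inE eqxx. Qed.

Lemma mine_maxe x : mine x <= maxe x.
Proof. apply: leq_trans (mine_le (hk_entries x)) (maxe_ge (hk_entries x)). Qed.

Lemma cle_iff A B : maxe A <= mine B <-> (forall u v, u \in entries A -> v \in entries B -> u <= v).
Proof.
split.
  move=> H u v uA vB; apply: leq_trans (maxe_ge uA) (leq_trans H (mine_le vB)).
move=> H; exact: H (maxe_mem A) (mine_mem B).
Qed.

Lemma clt_iff A B : maxe A < mine B <-> (forall u v, u \in entries A -> v \in entries B -> u < v).
Proof.
split.
  move=> H u v uA vB; apply: leq_ltn_trans (maxe_ge uA) (leq_trans H (mine_le vB)).
move=> H; exact: H (maxe_mem A) (mine_mem B).
Qed.

Lemma shape_nth T j : nth 0 (tab_shape T) j = size (col T j).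
Proof.
case: (ltnP j (size T)) => H; first by rewrite (nth_map [::]).
by rewrite !nth_default // size_map.
Qed.

Lemma size_shape T : size (tab_shape T) = size T.
Proof. by rewrite size_map. Qed.

Definition youngT (T : tab) :=
  (forall j, j < size T -> 0 < size (col T j)) /\
  (forall j, size (col T j.+1) <= size (col T j)).

Lemma youngP T : young (tab_shape T) <-> youngT T.
Proof.
rewrite /young; split.
  case/andP=> /(all_nthP 0) H1 /(sortedP 0) H2; split.
    by move=> j Hj; have := H1 j; rewrite size_shape shape_nth => /(_ Hj).
  move=> j; case: (ltnP j.+1 (size T)) => Hj.
    by have := H2 j; rewrite size_shape !shape_nth => /(_ Hj).
  by rewrite nth_default.
case=> H1 H2; apply/andP; split.
  by apply/(all_nthP 0) => j; rewrite size_shape shape_nth => /H1.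
by apply/(sortedP 0) => j _; rewrite !shape_nth /= H2.
Qed.

Lemma youngT_mono T j j' : youngT T -> j <= j' -> size (col T j') <= size (col T j).
Proof.
move=> [_ H] /subnK <-; elim: (j' - j) => //= d IH.
by rewrite addSn; apply: leq_trans (H _) IH.
Qed.

Definition validok (T : tab) := forall j i, i < size (col T j) -> valid_hook (cell T i j).
Definition rowok (T : tab) := forall i j, i < size (col T j.+1) ->
  maxe (cell T i j) <= mine (cell T i j.+1).
Definition colok (T : tab) := forall i j, i.+1 < size (col T j) ->
  maxe (cell T i j) < mine (cell T i.+1 j).

Lemma HVT_loc T : is_HVT T <-> [/\ youngT T, validok T, rowok T & colok T].
Proof.
split.
  case=> /youngP Y V R C; split => //.
    by move=> i j Hi; apply: R.
  by move=> i j Hi; apply: C.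
case=> Y V R C; split => //.
- by apply/youngP.
- move=> i j j' Hjj'; have -> : j' = j + (j' - j.+1).+1 by lia.
  elim: (j' - j.+1) => [|d IH]; first by rewrite addn1; apply: R.
  move=> Hs; rewrite addnS in Hs *.
  have Hs' : i < size (col T (j + d.+1)).
    by apply: leq_trans Hs (youngT_mono Y (leqnSn _)).
  apply: leq_trans (IH Hs') _; apply: leq_trans (mine_maxe _) (R _ _ Hs).
- move=> i i' j Hii'; have -> : i' = i + (i' - i.+1).+1 by lia.
  elim: (i' - i.+1) => [|d IH]; first by rewrite addn1; apply: C.
  move=> Hs; rewrite addnS in Hs *.
  have Hs' : i + d.+1 < size (col T j) by apply: ltnW.
  apply: leq_trans (IH Hs') _; apply: leq_trans (mine_maxe _) (ltnW (C _ _ Hs)).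
Qed.
Definition hasarm (c : seq hcell) := has (fun x => arm x != [::]) c.
Definition colarm (c : seq hcell) := sumn [seq size (arm x) | x <- c].

Lemma arm_excessE T : arm_excess T = sumn (map colarm T).
Proof. by []. Qed.

Lemma path_last_ge x0 s : path leq x0 s -> forall x, x \in x0 :: s -> x <= last x0 s.
Proof.
elim: s x0 => [|y s IH] x0 /=; first by move=> _ x; rewrite inE => /eqP->.
case/andP=> H1 H2 x; rewrite inE => /orP[/eqP->|Hx].
  by apply: leq_trans H1 (IH _ H2 _ _); rewrite inE eqxx.
exact: IH.
Qed.

Lemma arm_colE T : arm_col T = last 0 [seq j <- iota 0 (size T) | hasarm (col T j)].
Proof. by []. Qed.

Lemma arm_col_ge T j : hasarm (col T j) -> j <= arm_col T.
Proof.
move=> Hj; have Hjs : j < size T.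
  by rewrite ltnNge; apply/negP => H; move: Hj; rewrite nth_default.
rewrite arm_colE.
have : j \in [seq j <- iota 0 (size T) | hasarm (col T j)].
  by rewrite mem_filter mem_iota Hj; lia.
have : sorted leq [seq j <- iota 0 (size T) | hasarm (col T j)].
  apply: sorted_filter; first exact: leq_trans.
  by apply: (sub_sorted (@ltnW)); exact: iota_ltn_sorted.
case: [seq _ <- _ | _] => [|x0 s'] //= Hs Hin; exact: path_last_ge.
Qed.

Lemma arm_col_has T : (exists j, hasarm (col T j)) ->
  hasarm (col T (arm_col T)) /\ arm_col T < size T.
Proof.
case=> j Hj; rewrite arm_colE.
have Hjs : j < size T.
  by rewrite ltnNge; apply/negP => H; move: Hj; rewrite nth_default.
have : j \in [seq j <- iota 0 (size T) | hasarm (col T j)].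
  by rewrite mem_filter mem_iota Hj; lia.
have : forall x, x \in [seq j <- iota 0 (size T) | hasarm (col T j)] ->
   hasarm (col T x) /\ x < size T.
  by move=> x; rewrite mem_filter mem_iota => /andP[-> /andP[_ ->]].
case: [seq _ <- _ | _] => [|x0 s'] //= H _; apply: H; exact: mem_last.
Qed.

Lemma arm_col_gt_noarm T j : arm_col T < j -> ~~ hasarm (col T j).
Proof. by move=> H; apply/negP => /arm_col_ge; rewrite leqNgt H. Qed.

Lemma noarm_cell T j i : ~~ hasarm (col T j) -> arm (cell T i j) = [::].
Proof.
move=> H; rewrite /cell; case: (ltnP i (size (col T j))) => Hi.
  by move/hasPn: H => /(_ _ (mem_nth dcell Hi)); rewrite negbK => /eqP.
by rewrite nth_default.
Qed.

Lemma arm_col_le T c : (forall j, c < j -> ~~ hasarm (col T j)) -> arm_col T <= c.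
Proof.
move=> H; case: (boolP [exists j : 'I_(size T), hasarm (col T j)]).
  case/existsP=> j Hj; have [Ha _] := @arm_col_has T (ex_intro (fun j => hasarm (col T j)) _ Hj).
  by case: leqP => // /H; rewrite Ha.
move=> Hn; rewrite /arm_col.
suff -> : [seq j <- iota 0 (size T) | hasarm (col T j)] = [::] by [].
apply/eqP; rewrite -size_eq0 size_filter -leqn0 leqNgt -has_count; apply/negP.
case/hasP => j; rewrite mem_iota => /andP[_ Hj] Hh.
by move/negP: Hn; apply; apply/existsP; exists (Ordinal Hj).
Qed.

Lemma arm_col_eq T p : hasarm (col T p) -> (forall j, p < j -> ~~ hasarm (col T j)) ->
  arm_col T = p.
Proof.
move=> Hp H; apply/eqP; rewrite eqn_leq arm_col_le // arm_col_ge //.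
Qed.

Lemma colarm0 c : (colarm c == 0) = ~~ hasarm c.
Proof.
elim: c => //= x c IH; rewrite /colarm /= addn_eq0 -/(colarm c) IH size_eq0.
by case: (arm x == [::]).
Qed.

Lemma sumn0_nth (s : seq nat) : (sumn s == 0) = all (fun v => v == 0) s.
Proof. by elim: s => //= v s <-; rewrite addn_eq0. Qed.

Lemma arm_excess0 T : (arm_excess T == 0) = [forall j : 'I_(size T), ~~ hasarm (col T j)].
Proof.
rewrite arm_excessE sumn0_nth; apply/idP/forallP.
  move/allP => H j; rewrite -colarm0; apply: H; apply: map_f; exact: mem_nth.
move=> H; apply/allP => v /mapP [cc /(nthP [::]) [i Hi <-] ->].
by rewrite colarm0; exact: (H (Ordinal Hi)).
Qed.

Lemma arm_excess_has T : arm_excess T != 0 -> exists j, hasarm (col T j).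
Proof.
rewrite arm_excess0 => /forallPn [j]; rewrite negbK => H; by exists j.
Qed.

Lemma sumn_map_set_nth A (f : A -> nat) x0 s n y : f x0 = 0 ->
  sumn (map f (set_nth x0 s n y)) = sumn (map f s) + f y - f (nth x0 s n).
Proof.
move=> Hf.
have -> : map f (set_nth x0 s n y) = set_nth 0 (map f s) n (f y).
  apply: (@eq_from_nth _ 0); first by rewrite size_map !size_set_nth size_map.
  move=> i; rewrite size_map size_set_nth => Hi.
  rewrite (nth_map x0) ?size_set_nth // !nth_set_nth /=.
  case: eqP => // _; case: (ltnP i (size s)) => Hs; first by rewrite (nth_map x0).
  by rewrite !nth_default ?size_map.
rewrite sumn_set_nth0; congr (_ - _).
case: (ltnP n (size s)) => Hs; first by rewrite (nth_map x0).
by rewrite !nth_default ?size_map.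
Qed.

Lemma nth_le_sumn A (f : A -> nat) x0 s n : f x0 = 0 -> f (nth x0 s n) <= sumn (map f s).
Proof.
move=> Hf; elim: s n => [|z s IH] [|n] /=; rewrite ?Hf //; first by rewrite leq_addr.
apply: leq_trans (IH n) (leq_addl _ _).
Qed.

Definition colents (c : seq hcell) := flatten [seq entries y | y <- c].

Lemma colentsP c v : reflect (exists2 i, i < size c & v \in entries (nth dcell c i))
  (v \in colents c).
Proof.
apply: (iffP flattenP).
  case=> s /mapP [y Hy ->] Hv; exists (index y c); rewrite ?index_mem ?nth_index //.
case=> i Hi Hv; exists (entries (nth dcell c i)) => //; apply: map_f; exact: mem_nth.
Qed.

Lemma minopt_spec (s : seq nat) :
  match (if s is e :: _ then Some (foldr minn e s) else None) with
  | Some k => k \in s /\ forall v, v \in s -> k <= v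
  | None => s = [::]
  end.
Proof.
case: s => // e s; split.
  by have := mins_mem e (e :: s); rewrite inE => /orP[/eqP-> | ->]; rewrite ?inE ?eqxx.
move=> v Hv; apply: mins_le; by rewrite inE Hv orbT.
Qed.
Definition hl (z : hcell) := hk z :: leg z.

Lemma hl_entries z v : v \in hl z -> v \in entries z.
Proof. by rewrite /hl /entries !inE mem_cat => /orP[->|->]; rewrite ?orbT. Qed.

Lemma valid_hookE z : valid_hook z =
  [&& 0 < hk z, all (ltn (hk z)) (leg z), uniq (leg z), sorted leq (leg z),
      all (leq (hk z)) (arm z) & sorted leq (arm z)].
Proof.
rewrite /valid_hook /= (path_sortedE ltn_trans) (path_sortedE leq_trans) ltn_sorted_uniq_leq.
by case: (0 < hk z); case: all; case: uniq; case: sorted; case: all.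
Qed.

Lemma entriesE z v : (v \in entries z) = [|| v == hk z, v \in leg z | v \in arm z].
Proof. by rewrite /entries inE mem_cat. Qed.

Lemma repl1_mem k a s v : v \in repl1 k a s -> v = a \/ v \in s.
Proof.
elim: s => //= w s IH; case: eqP => _; rewrite !inE.
  by case/orP=> [/eqP->|->]; [left|right; rewrite orbT].
by case/orP=> [->|/IH [->|->]]; [right|left|right; rewrite orbT].
Qed.

Lemma repl1_in k a s : k \in s -> a \in repl1 k a s.
Proof.
elim: s => //= w s IH H; case: (w =P k) => [Ew|Nw]; first by rewrite inE eqxx.
move: H; rewrite inE => /orP [/eqP E|H]; first by case: Nw.
by rewrite inE IH ?orbT.
Qed.

Lemma repl1_uniq k a s : uniq s -> a \notin s -> uniq (repl1 k a s).
Proof.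
elim: s => //= w s IH /andP[ws us]; rewrite inE negb_or => /andP[aw as_].
case: eqP => _ /=; first by rewrite as_ us.
rewrite IH // andbT; apply/negP => /repl1_mem [E|]; last by apply/negP.
by move: aw; rewrite E eqxx.
Qed.

Lemma repl1_id k s : repl1 k k s = s.
Proof. by elim: s => //= w s ->; case: eqP => // ->. Qed.

Lemma mem_rem_sub (a v : nat) s : v \in rem a s -> v \in s.
Proof. exact: (mem_subseq (rem_subseq a s)). Qed.

Lemma mem_filter_sub (p : pred nat) (s : seq nat) v : v \in [seq z <- s | p z] -> v \in s.
Proof. by rewrite mem_filter => /andP []. Qed.

Lemma hkE p q s : hk (p, q, s) = p. Proof. by []. Qed.
Lemma legE p q s : leg (p, q, s) = q. Proof. by []. Qed.
Lemma armE p q s : arm (p, q, s) = s. Proof. by []. Qed.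

Lemma neqSn n : (n.+1 == n) = false. Proof. by elim: n. Qed.
Lemma neqnS n : (n == n.+1) = false. Proof. by elim: n. Qed.
Lemma neqSSn n : (n.+2 == n) = false. Proof. by elim: n. Qed.
Lemma colents_cell T0 j i v : i < size (col T0 j) -> v \in entries (cell T0 i j) ->
  v \in colents (col T0 j).
Proof. by move=> Hi Hv; apply/colentsP; exists i. Qed.

Lemma minopt_spec2 (s : seq nat) (P : nat -> bool) : (forall v, (v \in s) = P v) ->
  match (if s is e :: _ then Some (foldr minn e s) else None) with
  | Some k => P k /\ forall v, P v -> k <= v
  | None => forall v, ~~ P v
  end.
Proof.
move=> HP; have := minopt_spec s; case: s HP => [|e s] HP /=.
  by move=> _ v; rewrite -HP.
by case=> H1 H2; split; [rewrite -HP | move=> v; rewrite -HP; apply: H2].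
Qed.

Lemma minopt_spec3 (s : seq nat) (P : nat -> bool) (o : option nat) :
  o = (if s is e :: _ then Some (foldr minn e s) else None) ->
  (forall v, (v \in s) = P v) ->
  match o with
  | Some k => P k /\ forall v, P v -> k <= v
  | None => forall v, ~~ P v
  end.
Proof. move=> ->; exact: minopt_spec2. Qed.

Lemma minopt_spec4 (s : seq nat) (P : nat -> bool) (o : option nat) :
  o = (if s is e :: _ then Some (foldr minn e s) else None) ->
  (forall v, (v \in s) = P v) ->
  (forall k, o = Some k -> P k /\ forall v, P v -> k <= v) /\
  (o = None -> forall v, ~~ P v).
Proof. move=> E HP; have := minopt_spec3 E HP; case: o {E} => [k|] H; split => // k' [<-] //. Qed.
Section VbSec.
Variable T : tab.
Hypothesis HT : is_HVT T.
Hypothesis Hex : arm_excess T != 0.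

Let c := arm_col T.
Let cl := nth [::] T c.
Let mx := maxs [seq maxs (arm x) | x <- cl].
Let r := find (fun x => (arm x != [::]) && (maxs (arm x) == mx)) cl.
Let x := nth dcell cl r.
Let a := maxs (arm x).
Let l := maxs (leg x).
Let inS := fun y => (a < y) && (y <= l).
Let S := [seq y <- leg x | inS y].
Let cl' := nth [::] T c.+1.
Let ents := [seq v <- flatten [seq entries y | y <- cl'] | a <= v].
Let ok : option nat := if ents is e :: _ then Some (foldr minn e ents) else None.
Let rt := if ok is Some k then find (fun y => k \in entries y) cl' else size cl'.
Let y := nth dcell cl' rt.
Let addarm s := if ok is Some k then sort leq (rcons s k) else s.
Let x1 : hcell :=
      if rt != r then (hk x, leg x, rem a (arm x))
      else (hk x, [seq z <- leg x | ~~ inS z], rem a (arm x)).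
Let y1 : hcell :=
      if rt != r then
        match ok with
        | None => (a, [::], [::])
        | Some k =>
            if hk y == k then (a, leg y, addarm (arm y))
            else if k \in leg y then (hk y, sort leq (repl1 k a (leg y)), addarm (arm y))
            else (hk y, leg y, addarm (sort leq (repl1 k a (arm y))))
        end
      else (a, sort leq (S ++ leg y), addarm (arm y)).
Let T' := set_nth [::] (set_nth [::] T c (set_nth dcell cl r x1)) c.+1 (set_nth dcell cl' rt y1).

Lemma VbE : Vb T = T'.
Proof. by rewrite /Vb (negbTE Hex). Qed.

Let HL := HVT_loc T.
Lemma HT_Y : youngT T. Proof. by case: (proj1 (HVT_loc T) HT). Qed.
Lemma HT_V : validok T. Proof. by case: (proj1 (HVT_loc T) HT). Qed.
Lemma HT_R : rowok T. Proof. by case: (proj1 (HVT_loc T) HT). Qed.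
Lemma HT_C : colok T. Proof. by case: (proj1 (HVT_loc T) HT). Qed.

Lemma HT_row i j j' : j < j' -> i < size (col T j') -> maxe (cell T i j) <= mine (cell T i j').
Proof. by case: HT => _ _ H _; apply: H. Qed.
Lemma HT_col i i' j : i < i' -> i' < size (col T j) -> maxe (cell T i j) < mine (cell T i' j).
Proof. by case: HT => _ _ _ H; apply: H. Qed.

Lemma Fc : hasarm cl /\ c < size T.
Proof. exact: arm_col_has (arm_excess_has Hex). Qed.

Lemma Fnoarm j i : c < j -> arm (cell T i j) = [::].
Proof. by move=> H; apply: noarm_cell; apply: arm_col_gt_noarm. Qed.

Lemma valid_cell i j : i < size (col T j) -> valid_hook (cell T i j).
Proof. exact: HT_V. Qed.

Lemma arm_pos z e : valid_hook z -> e \in arm z -> 0 < e.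
Proof.
rewrite valid_hookE => /and5P [H0 _ _ _ /andP [/allP H _]] /H; exact: leq_trans.
Qed.

Lemma arm_ge_hk z e : valid_hook z -> e \in arm z -> hk z <= e.
Proof. by rewrite valid_hookE => /and5P [_ _ _ _ /andP [/allP H _]] /H. Qed.

Lemma leg_gt_hk z e : valid_hook z -> e \in leg z -> hk z < e.
Proof. by rewrite valid_hookE => /and5P [_ /allP H _ _ _] /H. Qed.

Lemma Fr : [/\ r < size cl, arm x != [::] & maxs (arm x) = mx].
Proof.
have [Hh _] := Fc.
set P := fun x => (arm x != [::]) && (maxs (arm x) == mx).
have HP : has P cl.
  have Hm : mx \in [seq maxs (arm x) | x <- cl].
    apply: maxs_mem; case/hasP: Hh => z zin _; apply/eqP => E.
    by have := map_f (fun x => maxs (arm x)) zin; rewrite E.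
  case/mapP: Hm => z zin Ez; apply/hasP; exists z => //; rewrite /P -Ez eqxx andbT.
  case/hasP: Hh => w win Hw.
  have Hwv : valid_hook w.
    case/(nthP dcell): win => i Hi <-; exact: valid_cell.
  have : 0 < mx.
    have [e ein] : exists e, e \in arm w.
      by case: (arm w) Hw => // e s _; exists e; rewrite mem_head.
    apply: leq_trans (arm_pos Hwv ein) _.
    apply: leq_trans (maxs_ge ein) _; rewrite /mx.
    apply: maxs_ge; apply: map_f => //.
  rewrite Ez; by case: (arm z).
have Hr : r < size cl by rewrite /r -has_find.
have := nth_find dcell HP; rewrite -/r -/x /P => /andP [H1 /eqP H2]; by split.
Qed.

Lemma x_cell : x = cell T r c. Proof. by []. Qed.

Lemma Fxv : valid_hook x.
Proof. by rewrite x_cell; apply: valid_cell; case: Fr. Qed.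

Lemma Fa_in : a \in arm x.
Proof. by case: Fr => _ H _; apply: maxs_mem. Qed.

Lemma Fa_max i e : e \in arm (cell T i c) -> e <= a.
Proof.
case: Fr => _ _ Ea; rewrite /a Ea => He.
case: (ltnP i (size cl)) => Hi; last by move: He; rewrite /cell nth_default.
apply: leq_trans (maxs_ge He) _; apply: maxs_ge; apply: map_f; exact: mem_nth.
Qed.

Lemma Fhk : 0 < hk x /\ hk x <= a.
Proof.
have V := Fxv; split; first by move: V; rewrite valid_hookE => /andP [].
exact: arm_ge_hk V Fa_in.
Qed.

Lemma Fa_pos : 0 < a.
Proof. by case: Fhk => H1 H2; apply: leq_trans H1 H2. Qed.

Lemma Fa_entries : a \in entries x.
Proof. by rewrite entriesE Fa_in !orbT. Qed.

Lemma Fok : (forall k, ok = Some k ->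
     [/\ k \in colents cl', a <= k & forall v, v \in colents cl' -> a <= v -> k <= v]) /\
  (ok = None -> forall v, v \in colents cl' -> v < a).
Proof.
have HP : forall v, (v \in ents) = (v \in colents cl') && (a <= v).
  by move=> v; rewrite mem_filter andbC.
have E : ok = (if ents is e :: _ then Some (foldr minn e ents) else None) by [].
have [H1 H2] := minopt_spec4 E HP; split.
  move=> k /H1 [/andP [Hk Hak] H3]; split => // v Hv Hav; apply: H3; by rewrite Hv Hav.
move=> /H2 H v Hv; have := H v; by rewrite Hv /= -ltnNge.
Qed.

Lemma FSome k : ok = Some k -> [/\ k \in colents cl', a <= k,
  (forall v, v \in colents cl' -> a <= v -> k <= v), rt < size cl' & k \in entries y].
Proof.
move=> Ek; have [H1 H2 H3] := proj1 Fok k Ek; split => //.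
  rewrite /rt Ek -has_find; apply/hasP.
  by case/colentsP: H1 => i Hi Hk; exists (nth dcell cl' i) => //; rewrite mem_nth.
rewrite /y /rt Ek; apply: (@nth_find _ dcell (fun y => k \in entries y)).
by apply/hasP; case/colentsP: H1 => i Hi Hk; exists (nth dcell cl' i) => //; rewrite mem_nth.
Qed.

Lemma FNone : ok = None -> [/\ (forall v, v \in colents cl' -> v < a), rt = size cl' & y = dcell].
Proof.
move=> E; have H := proj2 Fok E; split => //; first by rewrite /rt E.
by rewrite /y /rt E nth_default.
Qed.

Lemma y_cell : y = cell T rt c.+1. Proof. by []. Qed.

Lemma Fy_noarm : arm y = [::].
Proof. by rewrite y_cell; apply: Fnoarm. Qed.

Lemma Fr_lt : r < size cl. Proof. by case: Fr. Qed.

Lemma Frt_le : rt <= r.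
Proof.
rewrite leqNgt; apply/negP => Hlt.
have HrowR : forall u v, u \in entries x -> v \in entries (cell T r c.+1) -> r < size cl' -> u <= v.
  move=> u v Hu Hv Hs; have := HT_row (j := c) (j' := c.+1) (i := r) (ltnSn _) Hs.
  by move/cle_iff; apply.
case Eok: ok => [k|].
- case: (FSome Eok) => Hk Hak Hmin Hrt Hky.
  have Hr' : r < size cl' by apply: ltn_trans Hlt Hrt.
  set z := cell T r c.+1.
  have Hz : hk z \in colents cl' by apply: (colents_cell Hr'); rewrite hk_entries.
  have Haz : a <= hk z by apply: HrowR Fa_entries (hk_entries _) Hr'.
  have H1 := Hmin _ Hz Haz.
  have H2 := HT_col (j := c.+1) Hlt Hrt.
  move/clt_iff: H2 => /(_ (hk z) k (hk_entries _) Hky).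
  by rewrite ltnNge H1.
- case: (FNone Eok) => Hlt' Ert _; move: Hlt; rewrite Ert => Hr'.
  set z := cell T r c.+1.
  have Hz : hk z \in colents cl' by apply: (colents_cell Hr'); rewrite hk_entries.
  have Haz : a <= hk z by apply: HrowR Fa_entries (hk_entries _) Hr'.
  by have := Hlt' _ Hz; rewrite ltnNge Haz.
Qed.

Lemma Fbelow i v : i < rt -> v \in entries (cell T i c.+1) -> v < a.
Proof.
move=> Hi Hv; case Eok: ok => [k|].
- case: (FSome Eok) => Hk Hak Hmin Hrt Hky.
  rewrite ltnNge; apply/negP => Hav.
  have Hi' : i < size cl' by apply: ltn_trans Hi Hrt.
  have H1 := Hmin _ (colents_cell Hi' Hv) Hav.
  have := HT_col (j := c.+1) Hi Hrt; move/clt_iff => /(_ v k Hv Hky).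
  by rewrite ltnNge H1.
- case: (FNone Eok) => Hlt Ert _; apply: Hlt; apply: (colents_cell (i := i)) => //.
  by rewrite -Ert.
Qed.

Lemma Fyv : ok <> None -> valid_hook y.
Proof.
case Eok: ok => [k|] // _; case: (FSome Eok) => _ _ _ Hrt _; exact: valid_cell.
Qed.

Lemma Frr k : ok = Some k -> rt = r ->
  k = hk y /\ (forall u v, u \in entries x -> v \in entries y -> u <= v).
Proof.
move=> Eok Er; case: (FSome Eok) => Hk Hak Hmin Hrt Hky.
have Hxy : forall u v, u \in entries x -> v \in entries y -> u <= v.
  have H := HT_row (j := c) (j' := c.+1) (i := rt) (ltnSn _) Hrt.
  move/cle_iff: H => H u v Hu Hv; apply: H => //; by rewrite Er.
split => //.
move: Hky; rewrite entriesE Fy_noarm in_nil orbF => /orP [/eqP //|Hl].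
have V := Fyv; rewrite Eok in V; have := leg_gt_hk (V (fun H => ltac:(discriminate))) Hl.
have Hay : a <= hk y by apply: Hxy Fa_entries (hk_entries _).
have := Hmin _ (colents_cell Hrt (hk_entries _)) Hay.
by move=> H1 H2; move: (leq_ltn_trans H1 H2); rewrite ltnn.
Qed.

Lemma Fleg_case k : ok = Some k -> hk y != k -> k \in leg y /\ hk y < a.
Proof.
move=> Eok Hne; case: (FSome Eok) => Hk Hak Hmin Hrt Hky.
have Hl : k \in leg y.
  move: Hky; rewrite entriesE Fy_noarm in_nil orbF eq_sym (negbTE Hne); done.
split => //; rewrite ltnNge; apply/negP => Hay.
have V := Fyv; rewrite Eok in V; have := leg_gt_hk (V (fun H => ltac:(discriminate))) Hl.
have := Hmin _ (colents_cell Hrt (hk_entries _)) Hay.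
by move=> H1 H2; move: (leq_ltn_trans H1 H2); rewrite ltnn.
Qed.

Lemma Fx1 : [/\ hk x1 = hk x, arm x1 = rem a (arm x) &
  leg x1 = if rt != r then leg x else [seq z <- leg x | ~~ inS z]].
Proof. by rewrite /x1; case: ifP. Qed.

Lemma Fleg_l z : z \in leg x -> z <= l.
Proof. exact: maxs_ge. Qed.

Lemma FS v : v \in S -> a < v /\ v \in leg x.
Proof. by rewrite mem_filter => /andP [/andP [H _] H']. Qed.

Lemma FS_uniq : uniq S /\ sorted leq S.
Proof.
have := Fxv; rewrite valid_hookE => /and5P [_ _ U So _]; split.
  exact: filter_uniq.
by apply: sorted_filter => //; exact: leq_trans.
Qed.

Lemma Fx1_entries v : v \in entries x1 -> v \in entries x.
Proof.
case: Fx1 => Eh Ea El; rewrite !entriesE Eh Ea El.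
case/or3P=> [->//|H|/mem_rem_sub ->]; rewrite ?orbT //.
have H2 : v \in leg x by move: H; case: ifP => _ // /mem_filter_sub.
by rewrite H2 orbT.
Qed.

Lemma Fx1_arm e : e \in arm x1 -> e \in arm x /\ e <= a.
Proof.
case: Fx1 => _ -> _ /mem_rem_sub H; split => //; exact: maxs_ge.
Qed.

Lemma Fx1_le_a v : rt = r -> v \in entries x1 -> v <= a.
Proof.
move=> Er; case: Fx1 => Eh Ea El; rewrite entriesE Eh El Er eqxx /=.
case/or3P=> [/eqP->|H|/Fx1_arm [] //]; first by case: Fhk.
  move: H; rewrite mem_filter => /andP [H1 H2]; move: H1; rewrite /inS negb_and -leqNgt.
  by rewrite (Fleg_l H2) orbF.
Qed.

Lemma Fx1_hl v : v \in hl x -> v <= a -> v \in hl x1.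
Proof.
case: Fx1 => Eh _ El; rewrite /hl !inE Eh El => /orP [->//|H] Ha.
case: ifP => _; rewrite ?H ?orbT //.
by rewrite mem_filter H andbT /inS negb_and -leqNgt Ha orbT.
Qed.

Lemma Fx1_size : size (arm x1) = (size (arm x)).-1.
Proof. by case: Fx1 => _ -> _; rewrite size_rem // Fa_in. Qed.

Lemma Fx1_valid : valid_hook x1.
Proof.
have := Fxv; rewrite !valid_hookE; case: Fx1 => -> -> ->.
case/and5P=> H0 H1 H2 H3 /andP [H4 H5]; rewrite H0 /=.
apply/and5P; split.
- by case: ifP => _ //; apply/allP => z /mem_filter_sub; apply/allP.
- by case: ifP => _ //; apply: filter_uniq.
- by case: ifP => _ //; apply: sorted_filter => //; exact: leq_trans.
- by apply/allP => z /mem_rem_sub; apply/allP.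
- apply: (subseq_sorted leq_trans (rem_subseq _ _) H5).
Qed.

Lemma Fy1_cases :
  [\/ rt = r /\ y1 = (a, sort leq (S ++ leg y), if ok is Some k then [:: k] else [::]),
      [/\ rt <> r, ok = None & y1 = (a, [::], [::])],
      exists k, [/\ rt <> r, ok = Some k, hk y = k & y1 = (a, leg y, [:: k])] |
      exists k, [/\ rt <> r, ok = Some k, hk y != k, k \in leg y &
                   y1 = (hk y, sort leq (repl1 k a (leg y)), [:: k])]].
Proof.
rewrite /y1 /addarm Fy_noarm; case: (rt =P r) => Er /=.
  by apply: Or41; split => //; case: ok.
case Eok: ok => [k|]; last by apply: Or42.
case: (hk y =P k) => Ehk.
  by apply: Or43; exists k; split.
have [Hl _] := Fleg_case Eok (introN eqP Ehk).
by rewrite Hl; apply: Or44; exists k; split => //; apply/eqP.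
Qed.

Lemma FSy : ok <> None -> rt = r -> forall s v, s \in S -> v \in leg y -> s < v.
Proof.
case Eok: ok => [k|] // _ Er s v Hs Hv.
have [Ek Hxy] := Frr Eok Er.
have [_ Hsl] := FS Hs.
have Hsx : s \in entries x by rewrite entriesE Hsl orbT.
apply: leq_ltn_trans (Hxy _ _ Hsx (hk_entries _)) _.
apply: leg_gt_hk Hv; apply: Fyv; by rewrite Eok.
Qed.

Lemma Fy1_entries v : v \in entries y1 ->
  [\/ v = a, ok <> None /\ v \in entries y | rt = r /\ v \in S].
Proof.
case: Fy1_cases => [[Er ->]|[Er Eok ->]|[k [Er Eok Ehk ->]]|[k [Er Eok Ehk Hl ->]]];
  rewrite entriesE /=.
- case/or3P => [/eqP->||]; [by apply: Or31| |].
  + rewrite mem_sort mem_cat => /orP [H|H]; first by apply: Or33.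
    case Eok: ok => [k|]; last by case: (FNone Eok) => _ _ Ey; move: H; rewrite Ey.
    by apply: Or32; split => //; rewrite entriesE H orbT.
  + case Eok: ok => [k|] //; rewrite inE => /eqP ->; apply: Or32; split => //.
    by case: (FSome Eok).
- by rewrite !in_nil !orbF => /eqP ->; apply: Or31.
- case/or3P => [/eqP->|H|]; [by apply: Or31| |].
  + by apply: Or32; rewrite Eok; split => //; rewrite entriesE H orbT.
  + by rewrite inE => /eqP ->; apply: Or32; rewrite Eok; split => //; rewrite -Ehk hk_entries.
- case/or3P => [/eqP->|H|].
  + by apply: Or32; rewrite Eok; split => //; exact: (hk_entries y).
  + rewrite mem_sort in H; case: (repl1_mem H) => [->|H']; first by apply: Or31.
    by apply: Or32; rewrite Eok; split => //; rewrite entriesE H' orbT.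
  + by rewrite inE => /eqP ->; apply: Or32; rewrite Eok; split => //; rewrite entriesE Hl orbT.
Qed.

Lemma Fy1_arm : arm y1 = if ok is Some k then [:: k] else [::].
Proof.
by case: Fy1_cases => [[Er ->]|[Er Eok ->]|[k [Er Eok Ehk ->]]|[k [Er Eok Ehk Hl ->]]];
  rewrite ?Eok.
Qed.

Lemma Fy1_hl : a \in hl y1.
Proof.
case: Fy1_cases => [[Er ->]|[Er Eok ->]|[k [Er Eok Ehk ->]]|[k [Er Eok Ehk Hl ->]]];
  rewrite /hl /= ?mem_head //.
by rewrite inE mem_sort repl1_in ?orbT.
Qed.

Lemma Fy1_valid : valid_hook y1.
Proof.
have Ha := Fa_pos.
case: Fy1_cases => [[Er ->]|[Er Eok ->]|[k [Er Eok Ehk ->]]|[k [Er Eok Ehk Hl ->]]];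
  rewrite valid_hookE ?hkE ?legE ?armE /=.
- apply/and5P; split => //.
  + apply/allP => v; rewrite mem_sort mem_cat => /orP [/FS [] //|Hv].
    case Eok: ok => [k|]; last by move: Hv; case: (FNone Eok) => _ _ ->.
    have [Ek _] := Frr Eok Er; case: (FSome Eok) => _ Hak _ _ _.
    apply: leq_ltn_trans Hak _; rewrite Ek; apply: leg_gt_hk Hv; apply: Fyv; by rewrite Eok.
  + rewrite sort_uniq cat_uniq (proj1 FS_uniq) /=.
    case Eok: ok => [k|]; last by case: (FNone Eok) => _ _ ->.
    have Vy : valid_hook y by apply: Fyv; rewrite Eok.
    move: Vy; rewrite valid_hookE => /and5P [_ _ -> _ _]; rewrite andbT.
    apply/hasPn => v Hv; apply/negP => HvS.
    have := FSy (fun H => ltac:(by rewrite Eok in H)) Er HvS Hv; by rewrite ltnn.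
  + exact: sort_sorted leq_total _.
  + case Eok: ok => [k|] //=; case: (FSome Eok) => _ Hak _ _ _; by rewrite Hak.
- by rewrite Ha.
- have Vy : valid_hook y by apply: Fyv; rewrite Eok.
  case: (FSome Eok) => _ Hak _ _ _.
  move: Vy; rewrite valid_hookE => /and5P [_ H1 H2 H3 _]; rewrite Ha H2 H3 Hak /= andbT.
  apply/allP => v Hv; apply: leq_ltn_trans Hak _; rewrite -Ehk; by move/allP: H1; apply.
- have Vy : valid_hook y by apply: Fyv; rewrite Eok.
  have [_ Hya] := Fleg_case Eok Ehk.
  case: (FSome Eok) => Hk Hak Hmin Hrt _.
  move: Vy; rewrite valid_hookE => /and5P [H0 H1 H2 H3 _]; rewrite H0 /=.
  apply/and5P; split.
  + apply/allP => v; rewrite mem_sort => /repl1_mem [->//|Hv]; by move/allP: H1; apply.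
  + rewrite sort_uniq; case: (a =P k) => [->|Nak]; first by rewrite repl1_id.
    apply: repl1_uniq => //; apply/negP => Hal.
    have Hac : a \in colents cl' by apply: (colents_cell Hrt); rewrite entriesE Hal orbT.
    have := Hmin _ Hac (leqnn _) => Hka; apply: Nak; apply/eqP; by rewrite eqn_leq Hak Hka.
  + exact: sort_sorted leq_total _.
  + rewrite /= andbT; apply: ltnW; by move/allP: H1; apply.
  + by [].
Qed.

Lemma Fx1_mine : mine x <= mine x1.
Proof. apply: mine_le; apply: Fx1_entries; exact: mine_mem. Qed.
Lemma Fx1_maxe : maxe x1 <= maxe x.
Proof. apply: maxe_ge; apply: Fx1_entries; exact: maxe_mem. Qed.

Lemma Fy1_maxe : ok <> None -> maxe y1 <= maxe y.
Proof.
case Eok: ok => [k|] // _; case: (FSome Eok) => Hk Hak _ Hrt Hky.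
case: (Fy1_entries (maxe_mem y1)) => [->|[_ H]|[Er HS]].
- apply: leq_trans Hak (maxe_ge Hky).
- exact: maxe_ge.
- have [Ek Hxy] := Frr Eok Er; have [_ Hl] := FS HS.
  apply: leq_trans (Hxy _ _ _ (hk_entries _)) (maxe_ge (hk_entries _)).
  by rewrite entriesE Hl orbT.
Qed.

Lemma FT'_col j : col T' j =
  if j == c.+1 then set_nth dcell cl' rt y1 else if j == c then set_nth dcell cl r x1 else col T j.
Proof. rewrite /T' nth_set_nth /=; case: ifP => // _; by rewrite nth_set_nth. Qed.

Lemma FT'_cell i j : cell T' i j =
  if (j == c.+1) && (i == rt) then y1 else if (j == c) && (i == r) then x1 else cell T i j.
Proof.
rewrite /cell FT'_col; case: (eqVneq j c.+1) => [->|Nj] /=.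
  by rewrite nth_set_nth /=; case: (i == rt) => //; rewrite (_ : c.+1 == c = false) //; lia.
case: (eqVneq j c) => [->|Njc] //=; by rewrite nth_set_nth /=; case: (i == r).
Qed.

Lemma Fsize_rt : ok <> None -> rt < size cl'.
Proof. by case Eok: ok => [k|] // _; case: (FSome Eok). Qed.

Lemma FT'_size j : size (col T' j) = size (col T j) + ((j == c.+1) && (ok == None)).
Proof.
rewrite FT'_col; case: (eqVneq j c.+1) => [->|Nj] /=.
  rewrite size_set_nth; case Eok: ok => [k|] /=.
    have := Fsize_rt; rewrite Eok => /(_ ltac:(discriminate)) H.
    by rewrite addn0; apply/maxn_idPr.
  by case: (FNone Eok) => _ -> _; rewrite addn1; apply/maxn_idPl.
case: (eqVneq j c) => [->|Njc] /=; rewrite addn0 //.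
by rewrite size_set_nth; apply/maxn_idPr; exact: Fr_lt.
Qed.

Lemma FT'_sizeT : size T' = maxn c.+2 (size T).
Proof.
rewrite /T' !size_set_nth; congr maxn; apply/maxn_idPr; by case: Fc.
Qed.

Lemma Fsz_old i j : i < size (col T' j) -> ~~ ((j == c.+1) && (i == rt)) -> i < size (col T j).
Proof.
rewrite FT'_size; case: (eqVneq j c.+1) => [->|_] /=; last by rewrite addn0.
case Eok: ok => [k|] /=; first by rewrite addn0.
by case: (FNone Eok) => _ Ert _; rewrite -Ert addn1 ltnS leq_eqVlt => /orP [->|].
Qed.

Lemma Fnone_sz : ok = None -> size cl' < size cl.
Proof.
move=> E; case: (FNone E) => _ Ert _; rewrite -Ert; apply: leq_ltn_trans Frt_le Fr_lt.
Qed.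

Lemma FT'_young : youngT T'.
Proof.
have [Y1 Y2] := HT_Y; split.
  move=> j; rewrite FT'_sizeT FT'_size => Hj.
  case: (eqVneq j c.+1) => [->|Nj] /=.
    case Eok: ok => /=; last by rewrite addn1.
    by rewrite addn0; apply: leq_ltn_trans (leq0n rt) (Fsize_rt _); rewrite Eok.
  rewrite addn0; apply: Y1; have [_ Hc] := Fc; move: Hj Nj; rewrite /maxn.
  move: (c) Hc => c0 Hc0; case: (ltnP c0.+2 (size T)) => // H1 H2 /eqP H3; lia.
move=> j; rewrite !FT'_size.
case: (eqVneq j c) => [->|Njc].
  rewrite eqxx (_ : c == c.+1 = false) /=; last by lia.
  case Eok: ok => /=; first by rewrite !addn0; apply: Y2.
  by rewrite addn0 addn1; apply: Fnone_sz.
have -> : (j.+1 == c.+1) = false by apply/negbTE; rewrite eqSS.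
rewrite addn0; apply: leq_trans (Y2 j) (leq_addr _ _).
Qed.

Lemma FT'_valid : validok T'.
Proof.
move=> j i Hi; rewrite FT'_cell.
case: ifP => [_|H1]; first exact: Fy1_valid.
case: ifP => [_|H2]; first exact: Fx1_valid.
apply: valid_cell; apply: Fsz_old Hi _; by rewrite H1.
Qed.

Lemma Fleft_rt u : rt != r -> u \in entries (cell T rt c) -> u < a.
Proof.
move=> Ne Hu; have Hlt : rt < r by rewrite ltn_neqAle Ne Frt_le.
have := HT_col (j := c) Hlt Fr_lt; move/clt_iff => /(_ u a Hu Fa_entries) //.
Qed.

Lemma FT'_row : rowok T'.
Proof.
move=> i j Hi; rewrite !FT'_cell.
case: (eqVneq j c) => [Ej|Njc].
  subst j; rewrite ?eqxx ?neqnS ?neqSn /=.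
  case: (eqVneq i rt) => [Ei|Nirt] /=.
    subst i; apply/cle_iff => u v Hu Hv.
    case: (eqVneq rt r) => [Er|Ner].
      move: Hu; rewrite Er eqxx => /(Fx1_le_a Er) Hu.
      case: (Fy1_entries Hv) => [->//|[Hok Hvy]|[_ /FS [H _]]]; last by apply: ltnW; apply: leq_ltn_trans Hu H.
      case Eok: ok Hok => [k|] // _; have [_ Hxy] := Frr Eok Er.
      apply: leq_trans Hu (Hxy _ _ Fa_entries Hvy).
    move: Hu; rewrite (negbTE Ner) => Hu; have Hua := Fleft_rt Ner Hu.
    case: (Fy1_entries Hv) => [->|[Hok Hvy]|[Er _]]; first exact: ltnW.
      have := HT_row (j := c) (j' := c.+1) (i := rt) (ltnSn _) (Fsize_rt Hok).
      by move/cle_iff; apply.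
    by move/eqP: Ner; rewrite Er.
  have Hi' : i < size (col T c.+1) by apply: Fsz_old Hi _; rewrite eqxx Nirt.
  case: (eqVneq i r) => [Eir|Nir] /=.
    subst i; apply: leq_trans Fx1_maxe _; exact: HT_R.
  exact: HT_R.
case: (eqVneq j c.+1) => [Ej|Njc1].
  subst j; rewrite ?eqxx ?eqSS ?neqSn ?neqSSn /=.
  have Hi' : i < size (col T c.+2) by apply: Fsz_old Hi _; rewrite eqSS neqSn.
  case: (eqVneq i rt) => [Ei|Nirt] /=; last exact: HT_R.
  subst i.
  have Hok : ok <> None.
    move=> Eok; case: (FNone Eok) => _ Ert _; have [_ Y2] := HT_Y.
    by move: (leq_trans Hi' (Y2 c.+1)); rewrite -/cl' -Ert ltnn.
  apply: leq_trans (Fy1_maxe Hok) _; exact: HT_R.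
have -> : (j.+1 == c.+1) = false by apply/negbTE; rewrite eqSS.
rewrite ?(negbTE Njc) ?(negbTE Njc1) /=.
have Hi' : i < size (col T j.+1).
  by apply: Fsz_old Hi _; rewrite (_ : j.+1 == c.+1 = false) //; apply/negbTE; rewrite eqSS.
case: ifP => [/andP [/eqP Ej /eqP Ei]|_]; last exact: HT_R.
subst i; apply: leq_trans _ Fx1_mine; have := HT_R Hi'; by rewrite Ej.
Qed.

Lemma FT'_col_ok : colok T'.
Proof.
move=> i j Hi; rewrite !FT'_cell.
case: (eqVneq j c.+1) => [Ej|Nj].
  subst j; rewrite ?eqxx ?neqSn /=.
  case: (eqVneq i rt) => [Ei|Nirt] /=.
    subst i; rewrite neqSn /=.
    have Hok : ok <> None.
      move=> Eok; move: Hi; rewrite FT'_size eqxx Eok /=; case: (FNone Eok) => _ Ert _.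
      by rewrite -Ert addn1 ltnn.
    have Hi' : rt.+1 < size (col T c.+1).
      apply: Fsz_old Hi _; rewrite eqxx /=; lia.
    apply: leq_ltn_trans (Fy1_maxe Hok) _; exact: HT_C.
  case: (eqVneq i.+1 rt) => [Ei|Ni1] /=.
    apply/clt_iff => u v Hu Hv.
    have Hua : u < a by apply: (Fbelow (i := i)); rewrite // -Ei.
    case: (Fy1_entries Hv) => [->//|[Hok Hvy]|[_ /FS [H _]]]; last by apply: ltn_trans Hua H.
    have := HT_C (i := i) (j := c.+1); rewrite Ei => /(_ (Fsize_rt Hok)).
    by move/clt_iff; apply.
  apply: HT_C; apply: Fsz_old Hi _; by rewrite eqxx Ni1.
rewrite ?(negbTE Nj) /=; have Hi' : i.+1 < size (col T j).
  by apply: Fsz_old Hi _; rewrite (negbTE Nj).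
case: (eqVneq j c) => [Ej|Njc] /=; last exact: HT_C.
subst j; case: (eqVneq i r) => [Ei|Nir] /=.
  subst i; rewrite neqSn /=.
  apply: leq_ltn_trans Fx1_maxe _; exact: HT_C.
case: (eqVneq i.+1 r) => [Ei|Ni1] /=; last exact: HT_C.
apply: leq_trans _ Fx1_mine; have := HT_C Hi'; by rewrite Ei.
Qed.

Lemma FT'_HVT : is_HVT T'.
Proof.
apply/HVT_loc; split; [exact: FT'_young|exact: FT'_valid|exact: FT'_row|exact: FT'_col_ok].
Qed.

Lemma Fcolarm0 : colarm cl' = 0.
Proof.
apply/eqP; rewrite colarm0; apply/hasPn => z /(nthP dcell) [i Hi <-]; rewrite negbK.
apply/eqP; exact: (Fnoarm i (ltnSn c)).
Qed.

Lemma Fcolarm_c : colarm (col T' c) = (colarm cl).-1.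
Proof.
rewrite FT'_col neqnS eqxx /colarm sumn_map_set_nth // -!/(colarm _) Fx1_size -/x.
have H1 : 0 < size (arm x) by case: Fr => _; case: (arm x).
have H2 : size (arm x) <= colarm cl := @nth_le_sumn _ (fun z => size (arm z)) dcell cl r erefl.
move: H1 H2; move: (size (arm x)) (colarm cl) => p q; lia.
Qed.

Lemma Fcolarm_c1 : colarm (col T' c.+1) = if ok is Some _ then 1 else 0.
Proof.
rewrite FT'_col eqxx /colarm sumn_map_set_nth // -!/(colarm _) Fcolarm0 Fy1_arm -/y Fy_noarm.
by case: ok.
Qed.

Lemma Fexcess : arm_excess T' = (arm_excess T).-1 + (if ok is Some _ then 1 else 0).
Proof.
rewrite !arm_excessE /T' sumn_map_set_nth // sumn_map_set_nth //.
rewrite nth_set_nth /= neqSn -/cl'.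
have E1 := Fcolarm_c; rewrite FT'_col neqnS eqxx in E1; rewrite E1.
have E2 := Fcolarm_c1; rewrite FT'_col eqxx in E2; rewrite E2 Fcolarm0.
have H1 : 0 < colarm cl.
  by case: Fc => H _; rewrite lt0n colarm0 H.
have H2 : colarm cl <= sumn (map colarm T) := @nth_le_sumn _ colarm [::] T c erefl.
move: H1 H2; rewrite -arm_excessE; case: ok => [?|];
  move: (colarm cl) (arm_excess T) => p q; lia.
Qed.

Lemma FT'_cell_c i : cell T' i c = if i == r then x1 else cell T i c.
Proof. by rewrite FT'_cell neqnS eqxx. Qed.

Lemma FT'_cell_c1 i : cell T' i c.+1 = if i == rt then y1 else cell T i c.+1.
Proof. by rewrite FT'_cell eqxx neqSn /=; case: (i == rt). Qed.

Lemma Vb_spec : exists a r, [/\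
  [/\ r < size (col T c), a \in arm (cell T r c) &
      forall i e, e \in arm (cell T i c) -> e <= a],
  is_HVT (Vb T) /\ (forall j, j != c -> j != c.+1 -> col (Vb T) j = col T j),
  [/\ size (col (Vb T) c) = size (col T c),
      colarm (col (Vb T) c) = (colarm (col T c)).-1,
      (forall i e, e \in arm (cell (Vb T) i c) -> e \in arm (cell T i c)) &
      (forall i v, v \in hl (cell T i c) -> v <= a -> v \in hl (cell (Vb T) i c))],
  (exists2 i, i < size (col (Vb T) c.+1) & a \in hl (cell (Vb T) i c.+1)) &
  ((exists k, [/\ a <= k, (forall v, v \in colents (col T c.+1) -> a <= v -> k <= v),
     (forall i e, e \in arm (cell (Vb T) i c.+1) -> e = k) /\
     colarm (col (Vb T) c.+1) = 1,
     (forall j, size (col (Vb T) j) = size (col T j)) &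
     [/\ size (Vb T) = size T, arm_excess (Vb T) = arm_excess T &
        (exists2 v, v \in colents (col T c.+1) & a <= v)]])
   \/
   [/\ (forall v, v \in colents (col T c.+1) -> v < a),
     size (col (Vb T) c.+1) = (size (col T c.+1)).+1,
     (forall j, j != c.+1 -> size (col (Vb T) j) = size (col T j)),
     (forall i, arm (cell (Vb T) i c.+1) = [::]) /\ size (col T c.+1) < size (col T c) &
     size (Vb T) = maxn c.+2 (size T) /\ arm_excess (Vb T) = (arm_excess T).-1])].
Proof.
rewrite VbE; exists a, r; split.
- split; [exact: Fr_lt|exact: Fa_in|exact: Fa_max].
- split; first exact: FT'_HVT.
  by move=> j /negbTE H1 /negbTE H2; rewrite FT'_col H1 H2.
- split.
  + by rewrite FT'_size neqnS addn0.
  + exact: Fcolarm_c.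
  + move=> i e; rewrite FT'_cell_c; case: (eqVneq i r) => [->|_] //.
    by move/Fx1_arm => [H _]; exact: H.
  + move=> i v; rewrite FT'_cell_c; case: (eqVneq i r) => [->|] // Hv Ha; exact: Fx1_hl.
- exists rt; last by rewrite FT'_cell_c1 eqxx; exact: Fy1_hl.
  by rewrite FT'_size eqxx; case Eok: ok => /=;
    [rewrite addn0; apply: Fsize_rt; rewrite Eok | case: (FNone Eok) => _ -> _; rewrite addn1].
- case Eok: ok => [k|]; [left; exists k | right].
  + case: (FSome Eok) => Hk Hak Hmin Hrt Hky; split => //.
    * split; last by rewrite Fcolarm_c1 Eok.
      move=> i e; rewrite FT'_cell_c1; case: (i == rt).
        by rewrite Fy1_arm Eok inE => /eqP.
      by rewrite Fnoarm.
    * by move=> j; rewrite FT'_size Eok andbF addn0.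
    * split.
      - rewrite FT'_sizeT; apply/maxn_idPr.
        case: (ltnP c.+1 (size T)) => // H; move: Hrt; rewrite /cl' nth_default //.
      - by rewrite Fexcess Eok; have := Hex; case: (arm_excess T) => //= n _; rewrite addn1.
      - by exists k.
  + case: (FNone Eok) => H1 Ert Ey; split => //.
    * by rewrite FT'_size Eok eqxx addn1.
    * by move=> j /negbTE Hj; rewrite FT'_size Hj addn0.
    * split; last exact: Fnone_sz.
      move=> i; rewrite FT'_cell_c1; case: (i == rt); last by rewrite Fnoarm.
      by rewrite Fy1_arm Eok.
    * by rewrite FT'_sizeT Fexcess Eok addn0.
Qed.

End VbSec.

Definition Inner (P R : tab) (c p j0 : nat) (u w : nat -> nat) (n : nat) : Prop :=
 [/\ [/\ is_HVT R, arm_excess R = arm_excess P, size R = size P &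
         (forall m, size (col R m) = size (col P m))],
     [/\ arm_col R = p, hasarm (col R p), c <= p, size P <= p + n & 0 < arm_excess P],
     [/\ (forall m, c < m -> m < p -> ~~ hasarm (col R m)),
         (c < p -> colarm (col R p) = 1),
         (forall m, c < m -> m <= p -> exists2 i, i < size (col R m) & u m \in hl (cell R i m)),
         (forall m, c < m -> m < p -> u m <= u m.+1) &
         (c < p -> (forall i e, e \in arm (cell R i p) -> u p <= e) /\
                  (forall i e, e \in arm (cell R i c) -> e <= u c.+1))] &
     [/\ (forall m, p < m -> m <= j0 -> w m \in colents (col R m)),
         (forall m, p < m -> m < j0 -> w m <= w m.+1) &
         (p < j0 -> forall i e, e \in arm (cell R i p) -> e <= w p.+1)]].

Definition Chain (R : tab) (c j : nat) : Prop := exists w : nat -> nat,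
  [/\ (forall m, c < m -> m <= j -> w m \in colents (col R m)),
      (forall m, c < m -> m < j -> w m <= w m.+1) &
      (c < j -> forall i e, e \in arm (cell R i c) -> e <= w c.+1)].

Definition VOut (P R' : tab) (c j0 : nat) : Prop := exists j,
  [/\ [/\ j0 < j, c < j & j <= size P], is_HVT R', arm_excess R' = (arm_excess P).-1,
      [/\ (forall m, size (col R' m) = size (col P m) + (m == j)), size R' = maxn (size P) j.+1 &
          (forall m, c < m -> ~~ hasarm (col R' m))] &
      Chain R' c j].

Lemma ViterE n R : Viter n R = if (tab_shape (Vb R) != tab_shape R) || (Vb R == R) then Vb R
  else if n is n'.+1 then Viter n' (Vb R) else Vb R.
Proof. by case: n. Qed.

Lemma shape_eqP T1 T2 : size T1 = size T2 -> (forall j, size (col T1 j) = size (col T2 j)) ->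
  tab_shape T1 = tab_shape T2.
Proof.
move=> Hs Hc; apply: (@eq_from_nth _ 0); first by rewrite !size_shape.
by move=> i _; rewrite !shape_nth.
Qed.

Lemma shape_neqP T1 T2 j : size (col T1 j) != size (col T2 j) -> tab_shape T1 != tab_shape T2.
Proof. by move=> H; apply/negP => /eqP E; move: H; rewrite -!shape_nth E eqxx. Qed.

Lemma colarm_pos cc : hasarm cc -> 0 < colarm cc.
Proof. by rewrite lt0n colarm0 negbK. Qed.

Lemma hasarm_cell T j i e : e \in arm (cell T i j) -> hasarm (col T j).
Proof.
rewrite /cell => He; case: (ltnP i (size (col T j))) => Hi; last by move: He; rewrite nth_default.
apply/hasP; exists (nth dcell (col T j) i); first exact: mem_nth.
by case: (arm _) He.
Qed.

Lemma hl_colents T j i v : i < size (col T j) -> v \in hl (cell T i j) -> v \in colents (col T j).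
Proof. move=> Hi Hv; apply: (colents_cell Hi); exact: hl_entries. Qed.

Lemma colents_size T j v : v \in colents (col T j) -> j < size T.
Proof.
move=> Hv; rewrite ltnNge; apply/negP => H; move: Hv; by rewrite nth_default.
Qed.

Lemma noarm_hasarm T j : (forall i, arm (cell T i j) = [::]) -> ~~ hasarm (col T j).
Proof.
move=> H; apply/hasPn => z /(nthP dcell) [i Hi <-]; rewrite negbK; apply/eqP; exact: H.
Qed.

Lemma colarm0_hasarm cc : colarm cc = 0 -> ~~ hasarm cc.
Proof. by move=> H; rewrite -colarm0 H. Qed.

Lemma Viter_step P c j0 n R p u w : Inner P R c p j0 u w n ->
  (Viter n R = Vb R /\ VOut P (Vb R) c j0) \/
  (exists n' u', [/\ n = n'.+1, Viter n R = Viter n' (Vb R) & Inner P (Vb R) c p.+1 j0 u' w n']).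
Proof.
case=> [[HR HexE HsT Hsc] [Hac Hhas Hcp Hfuel Hpos] [I4 I5 I6 I7 I89] [I10 I11 I12]].
have HexR : arm_excess R != 0 by rewrite HexE -lt0n.
have := Vb_spec HR HexR; rewrite Hac.
case=> a [r [[Hr Har Hamax] [HR' Hcol'] [Hsz_p Hca_p Harm_p Hhl_p] [i0 Hi0 Hai0] Hcase]].
set u' := fun m => if m == p.+1 then a else u m.
have Hcell' : forall m i, m != p -> m != p.+1 -> cell (Vb R) i m = cell R i m.
  by move=> m i H1 H2; rewrite /cell Hcol'.
have Hup : c < p -> u p <= a by move=> H; case: (I89 H) => H1 _; apply: H1 Har.
have J6 : forall m, c < m -> m <= p.+1 ->
    exists2 i, i < size (col (Vb R) m) & u' m \in hl (cell (Vb R) i m).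
  move=> m H1 H2; rewrite /u' /=; case: (eqVneq m p.+1) => [->|Nm1]; first by exists i0.
  have H2' : m <= p by rewrite -ltnS ltn_neqAle Nm1 H2.
  case: (I6 m H1 H2') => i Hi Hu; exists i.
    case: (eqVneq m p) => [Em|Nm]; first by subst m; rewrite Hsz_p.
    by rewrite Hcol'.
  case: (eqVneq m p) => [Em|Nm]; last by rewrite Hcell'.
  subst m; apply: (Hhl_p _ _ Hu); apply: Hup H1.
have J7 : forall m, c < m -> m < p.+1 -> u' m <= u' m.+1.
  move=> m H1 H2; rewrite /u' /= eqSS; have Nm1 : m != p.+1 by rewrite neq_ltn H2.
  rewrite (negbTE Nm1); case: (eqVneq m p) => [Em|Nm]; first by subst m; apply: Hup.
  have H2' : m < p by rewrite ltn_neqAle Nm -ltnS.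
  exact: I7.
have J9 : c < p.+1 -> forall i e, e \in arm (cell (Vb R) i c) -> e <= u' c.+1.
  move=> H i e; rewrite /u' /= eqSS; case: (eqVneq c p) => [Ec|Nc].
    by subst c => /Harm_p; apply: Hamax.
  have Hcp' : c < p by rewrite ltn_neqAle Nc Hcp.
  rewrite Hcell' //; last by rewrite neq_ltn ltnS (ltnW Hcp').
  by case: (I89 Hcp') => _; apply.
have J4 : forall m, c < m -> m < p.+1 -> ~~ hasarm (col (Vb R) m).
  move=> m H1 H2; case: (eqVneq m p) => [Em|Nm].
    subst m; apply: colarm0_hasarm; by rewrite Hca_p I5.
  have H2' : m < p by rewrite ltn_neqAle Nm -ltnS.
  rewrite Hcol' //; [exact: I4 | by rewrite neq_ltn ltnS (ltnW H2') ].
have Jfar : forall m, p.+1 < m -> ~~ hasarm (col (Vb R) m).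
  move=> m H; rewrite Hcol'; first by apply: arm_col_gt_noarm; rewrite Hac; apply: ltn_trans H.
    by rewrite neq_ltn (ltn_trans (ltnSn p) H) orbT.
  by rewrite neq_ltn H orbT.
case: Hcase => [[k [Hak Hkmin [Hkarm Hca1] Hszs [HsT' Hex' [v0 Hv0 Hav0]]]] |
                [Hlt Hsz1 Hszo [Harm1 Hszlt] [HsT' Hex']]].
- right.
  have Hsh : tab_shape (Vb R) = tab_shape R by apply: shape_eqP.
  have Hne : (Vb R == R) = false.
    apply/negP => /eqP E; move: Hca_p; rewrite E; have := colarm_pos Hhas.
    move: (colarm _) => q; lia.
  have Hp1 : p.+1 < size R by apply: colents_size Hv0.
  case: n Hfuel => [|n'] Hfuel; first by rewrite HsT in Hp1; lia.
  exists n', u'; split => //.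
    by rewrite ViterE Hsh eqxx Hne.
  split.
  + split => //; [by rewrite Hex' | by rewrite HsT' | by move=> m; rewrite Hszs].
  + split => //; last by rewrite addSnnS.
    * apply: arm_col_eq; last exact: Jfar.
      by apply/negPn; rewrite -colarm0 Hca1.
    * by apply/negPn; rewrite -colarm0 Hca1.
    * by apply: leq_trans Hcp _.
  + split; [exact: J4 | move=> _; exact: Hca1 | exact: J6 | exact: J7 | ].
    move=> H; split; last exact: J9.
    move=> i e /Hkarm ->; by rewrite /u' /= eqxx.
  + split.
    * move=> m H1 H2; rewrite Hcol'; first by apply: I10 => //; exact: ltn_trans (ltnSn p) H1.
        by rewrite neq_ltn (ltn_trans (ltnSn p) H1) orbT.
      by rewrite neq_ltn H1 orbT.
    * move=> m H1 H2; apply: I11 => //; exact: ltn_trans (ltnSn p) H1.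
    * move=> H i e /Hkarm ->.
      have Hpj : p < j0 by apply: ltn_trans H.
      apply: leq_trans (I11 p.+1 (ltnSn p) H).
      apply: Hkmin; first by apply: I10.
      by apply: (I12 Hpj r a Har).
- left.
  have Hsh : tab_shape (Vb R) != tab_shape R.
    by apply: (shape_neqP (j := p.+1)); rewrite Hsz1; move: (size _) => q; lia.
  split; first by rewrite ViterE Hsh.
  exists p.+1; split => //.
  + split.
    * rewrite ltnS leqNgt; apply/negP => Hpj.
      have := Hlt _ (I10 p.+1 (ltnSn p) Hpj); rewrite ltnNge (I12 Hpj r a Har); done.
    * by rewrite ltnS.
    * rewrite -HsT; have := @arm_col_has R (ex_intro (fun j => hasarm (col R j)) p Hhas).
      by rewrite Hac; case.
  + by rewrite Hex' HexE.
  + split.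
    * move=> m; case: (eqVneq m p.+1) => [->|Nm]; first by rewrite Hsz1 Hsc addn1.
      by rewrite Hszo // Hsc addn0.
    * by rewrite HsT' HsT maxnC.
    * move=> m Hm; case: (ltngtP m p.+1) => [H|H|->].
      - exact: J4.
      - exact: Jfar.
      - exact: noarm_hasarm.
  + exists u'; split => //.
    * move=> m H1 H2; case: (J6 m H1 H2) => i Hi Hu; exact: hl_colents Hi Hu.
Qed.

Lemma Viter_chain P c j0 n : forall R p u w, Inner P R c p j0 u w n -> VOut P (Viter n R) c j0.
Proof.
elim: n => [|n IH] R p u w H; case: (Viter_step H) => [[-> Hout] // | [n' [u' [En EV Hin]]]] //.
case: En => En; subst n'; rewrite EV; exact: IH Hin.
Qed.

Lemma V_spec P j0 : is_HVT P -> 0 < arm_excess P -> arm_col P <= j0 ->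
  Chain P (arm_col P) j0 -> VOut P (V P) (arm_col P) j0.
Proof.
move=> HP Hpos Hj0 [w [W1 W2 W3]].
apply: (@Viter_chain P (arm_col P) j0 (size P).+1 P (arm_col P) (fun _ => 0) w).
have HexP : arm_excess P != 0 by rewrite -lt0n.
have [Hh _] := arm_col_has (arm_excess_has HexP).
split => //.
- split => //; exact: leq_trans (leqnSn _) (leq_addl _ _).
- split.
  + by move=> m H1 H2; move: (ltn_trans H1 H2); rewrite ltnn.
  + by rewrite ltnn.
  + by move=> m H1 H2; move: (leq_trans H1 H2); rewrite ltnn.
  + by move=> m H1 H2; move: (ltn_trans H1 H2); rewrite ltnn.
  + by rewrite ltnn.
Qed.

Lemma find_iota_first (f : pred nat) N m j : m <= j -> j < m + N -> f j ->
  (forall i, m <= i -> i < j -> ~~ f i) -> find f (iota m N) = j - m.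
Proof.
elim: N m => [|N IH] m H1 H2 H3 H4; first by move: (leq_ltn_trans H1 H2); rewrite addn0 ltnn.
rewrite /= ; case: (eqVneq m j) => [Em|Nm].
  by subst m; rewrite H3 subnn.
have Hmj : m < j by rewrite ltn_neqAle Nm H1.
rewrite (negbTE (H4 m (leqnn m) Hmj)) IH //; first by rewrite subnS prednK // subn_gt0.
- by rewrite addSnnS.
- by move=> i Hi; apply: H4; apply: ltnW.
Qed.

Lemma new_cell_spec (s s' : seq nat) j : (forall m, nth 0 s' m = nth 0 s m + (m == j)) ->
  j < size s' -> new_cell s s' = (nth 0 s j, j).
Proof.
move=> Hs Hj; rewrite /new_cell find_map.
have -> : find (preim (fun i => nth 0 s i != nth 0 s' i) id) (iota 0 (size s').+1) = j.
  rewrite (@find_iota_first _ _ 0 j) ?subn0 //.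
  - by rewrite add0n; apply: ltnW; rewrite ltnS.
  - by rewrite /preim /= Hs eqxx addn1 neq_ltn ltnSn.
  - move=> i _ Hi; rewrite /preim /= Hs (_ : i == j = false) ?addn0 ?eqxx //.
    by apply/negbTE; rewrite neq_ltn Hi.
by rewrite Hs eqxx addn1.
Qed.

Definition OInv (lam : seq nat) (P : tab) (Q : filling) (cl jl : nat) : Prop :=
  [/\ is_HVT P,
      [/\ young lam, size lam <= size (tab_shape P),
          (forall j, nth 0 lam j <= nth 0 (tab_shape P) j) &
          nth 0 lam 0 = nth 0 (tab_shape P) 0],
      [/\ (forall i j, in_skew lam (tab_shape P) i j ->
              [/\ 0 < Q i j, Q i j + cl <= j & (Q i j + cl = j -> j <= jl)]),
          (forall i j j', j < j' -> in_skew lam (tab_shape P) i j ->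
              in_skew lam (tab_shape P) i j' -> Q i j < Q i j') &
          (forall i i' j, i < i' -> in_skew lam (tab_shape P) i j ->
              in_skew lam (tab_shape P) i' j -> Q i j < Q i' j)],
      cl <= jl &
      arm_col P <= cl /\ (arm_col P = cl -> Chain P cl jl)].

Lemma OInv_final lam P Q cl jl : OInv lam P Q cl jl -> col_flagged_increasing lam (tab_shape P) Q.
Proof.
case=> HP [Yl Hsz Hnth H0] [S1 S2 S3] _ _; split => //.
- by case: HP.
- split.
  + move=> i j Hs; case: (S1 i j Hs) => H1 H2 _; split => //.
    by apply: leq_trans H2; apply: leq_addr.
  + exact: S2.
  + exact: S3.
Qed.

Lemma in_skew_new lam mu mu' j i m : (forall m, nth 0 mu' m = nth 0 mu m + (m == j)) ->
  nth 0 lam j <= nth 0 mu j ->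
  in_skew lam mu' i m = in_skew lam mu i m || ((i == nth 0 mu j) && (m == j)).
Proof.
move=> Hm Hl; rewrite /in_skew Hm; case: (eqVneq m j) => [->|Nm]; last by rewrite addn0 andbF orbF.
rewrite addn1 ltnS ?eqxx ?andbT.
case: (ltngtP i (nth 0 mu j)) => [H|H|->]; rewrite ?Hl ?orbT ?andbT ?orbF ?andbF //.

Qed.

Lemma OInv_step lam P Q cl jl : OInv lam P Q cl jl -> 0 < arm_excess P ->
  OInv lam (V P) (fun i j => if (i, j) == new_cell (tab_shape P) (tab_shape (V P))
                             then (new_cell (tab_shape P) (tab_shape (V P))).2 - arm_col P
                             else Q i j)
       (arm_col P) (new_cell (tab_shape P) (tab_shape (V P))).2 /\
  arm_excess (V P) = (arm_excess P).-1.
Proof.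
case=> HP [Yl Hsz Hnth H0] [S1 S2 S3] Hcj [Hac Hch] Hpos.
set c := arm_col P.
set j0 := if c == cl then jl else c.
have Hc0 : c <= j0 by rewrite /j0; case: eqP => [->|].
have Hchain : Chain P c j0.
  rewrite /j0; case: eqP => [Ec|_]; first by rewrite Ec; exact: Hch Ec.
  exists (fun _ => 0); split.
  - by move=> m H1 H2; move: (leq_trans H1 H2); rewrite ltnn.
  - by move=> m H1 H2; move: (ltn_trans H1 H2); rewrite ltnn.
  - by rewrite ltnn.
have [j [[Hj0 Hcj' HjP] HP' Hex' [Hszc HszT' Hnoarm] Hch']] := V_spec HP Hpos Hc0 Hchain.
have Hnth' : forall m, nth 0 (tab_shape (V P)) m = nth 0 (tab_shape P) m + (m == j).
  by move=> m; rewrite !shape_nth.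
have Hjs : j < size (tab_shape (V P)) by rewrite size_shape HszT' leq_max ltnSn orbT.
have Erc : new_cell (tab_shape P) (tab_shape (V P)) = (nth 0 (tab_shape P) j, j).
  exact: new_cell_spec.
rewrite Erc /=; split => //.
set h := nth 0 (tab_shape P) j.
have Hsk : forall i m, in_skew lam (tab_shape (V P)) i m =
    in_skew lam (tab_shape P) i m || ((i == h) && (m == j)).
  by move=> i m; apply: in_skew_new.
have Hold : forall i m, in_skew lam (tab_shape P) i m -> ((i, m) == (h, j)) = false.
  move=> i m; rewrite /in_skew xpair_eqE => /andP [_ Hi]; apply/negP => /andP [/eqP Ei /eqP Em].
  by move: Hi; rewrite Ei Em ltnn.
have Hcl : c <= cl by [].
have HQc : forall i m, in_skew lam (tab_shape P) i m -> Q i m + c <= m /\ (Q i m + c = m -> m < j).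
  move=> i m Hs; case: (S1 i m Hs) => _ H1 H2; split.
    by apply: leq_trans H1; rewrite leq_add2l.
  move=> E; have Ecl : c = cl.
    by apply/eqP; rewrite eqn_leq Hcl /=; rewrite -(leq_add2l (Q i m)) E H1.
  have := H2; rewrite -Ecl E => /(_ erefl) Hm; apply: leq_ltn_trans Hm _.
  by move: Hj0; rewrite /j0 Ecl eqxx.
have Hyoung : youngT P by case: (proj1 (HVT_loc P) HP).
have Hnoright : forall j', j < j' -> ~~ in_skew lam (tab_shape P) h j'.
  move=> j' Hjj'; rewrite /in_skew negb_and -leqNgt /h !shape_nth; apply/orP; right.
  apply: youngT_mono Hyoung (ltnW Hjj').
have Hnoabove : forall i', h < i' -> ~~ in_skew lam (tab_shape P) i' j.
  move=> i' Hi'; rewrite /in_skew negb_and -leqNgt; apply/orP; right; exact: ltnW.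
split => //.
- split => //.
  + by rewrite size_shape HszT' -size_shape; apply: leq_trans Hsz (leq_maxl _ _).
  + by move=> m; rewrite Hnth'; apply: leq_trans (Hnth m) (leq_addr _ _).
  + by rewrite Hnth' (_ : 0 == j = false) ?addn0 //; apply/negbTE; rewrite neq_ltn (leq_ltn_trans (leq0n c) Hcj').
- split.
  + move=> i m; rewrite Hsk => /orP [Hs|/andP [/eqP Ei /eqP Em]].
      rewrite Hold //; case: (S1 i m Hs) => H1 _ _; case: (HQc i m Hs) => H2 H3; split => //.
      by move=> /H3 /ltnW.
    subst i m; rewrite eqxx subn_gt0 Hcj' subnK ?(ltnW Hcj') //; split => //.
  + move=> i m m' Hmm'; rewrite !Hsk => /orP [Hs|/andP [/eqP Ei /eqP Em]] /orP [Hs'|/andP [/eqP Ei' /eqP Em']].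
    * by rewrite !Hold //; apply: S2.
    * subst i m'; rewrite Hold // eqxx; case: (HQc h m Hs) => H1 _.
      rewrite ltn_subRL; apply: leq_ltn_trans _ Hmm'; by rewrite addnC.
    * subst i m; by move: (Hnoright m' Hmm'); rewrite Hs'.
    * by subst m m'; move: Hmm'; rewrite ltnn.
  + move=> i i' m Hii'; rewrite !Hsk => /orP [Hs|/andP [/eqP Ei /eqP Em]] /orP [Hs'|/andP [/eqP Ei' /eqP Em']].
    * by rewrite !Hold //; apply: S3.
    * subst i' m; rewrite Hold // eqxx; case: (HQc i j Hs) => H1 H2.
      rewrite ltn_subRL addnC; move: H1; rewrite leq_eqVlt => /orP [/eqP E|//].
      by move: (H2 E); rewrite ltnn.
    * subst i m; by move: (Hnoabove i' Hii'); rewrite Hs'.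
    * by subst i i'; move: Hii'; rewrite ltnn.
- exact: ltnW.
- split; last by move=> _; exact: Hch'.
  apply: arm_col_le; exact: Hnoarm.
Qed.

Lemma uncrowd_aux_spec lam n : forall P Q cl jl, arm_excess P = n -> OInv lam P Q cl jl ->
  col_flagged_increasing lam (tab_shape (uncrowd_aux n P Q).1) (uncrowd_aux n P Q).2.
Proof.
elim: n => [|n IH] P Q cl jl Hn Hinv; first exact: OInv_final Hinv.
have Hpos : 0 < arm_excess P by rewrite Hn.
have [Hinv' Hex'] := OInv_step Hinv Hpos.
rewrite /=; apply: IH Hinv'; by rewrite Hex' Hn.
Qed.

Theorem lemma3p9 (T : tab) :
  is_HVT T ->
  col_flagged_increasing (tab_shape T) (tab_shape (uncrowdP T)) (uncrowdQ T).
Proof.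
move=> HT; rewrite /uncrowdP /uncrowdQ /uncrowd.
apply: (@uncrowd_aux_spec _ _ T _ (arm_col T) (arm_col T)) => //.
split => //.
- split => //; by case: HT.
- split.
  + by move=> i j; rewrite /in_skew; case: leqP.
  + by move=> i j j' _; rewrite /in_skew; case: leqP.
  + by move=> i i' j _; rewrite /in_skew; case: leqP.
- split => // _; exists (fun _ => 0); split.
  + by move=> m H1 H2; move: (leq_trans H1 H2); rewrite ltnn.
  + by move=> m H1 H2; move: (ltn_trans H1 H2); rewrite ltnn.
  + by rewrite ltnn.
Qed.
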